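(* Let $\Lambda$ be a unital commutative ring, $q$ a non-negative integer, $\mathfrak g$ a Lie algebra over $\Lambda$ and $\mathfrak h$ an ideal of $\mathfrak g$. (i) There is a Lie algebra homomorphism $\xi^{\otimes}\colon\mathfrak h\otimes^q\mathfrak g\to\mathfrak g$ with $\xi^{\otimes}(h\otimes g)=[h,g]$ and (when $q\ge1$) $\xi^{\otimes}(\{h\})=qh$ for $h\in\mathfrak h$, $g\in\mathfrak g$; moreover $\xi^{\otimes}$ factors through the canonical projection $\mathfrak h\otimes^q\mathfrak g\to\mathfrak h\wedge^q\mathfrak g$, inducing a Lie homomorphism $\xi^{\wedge}\colon\mathfrak h\wedge^q\mathfrak g\to\mathfrak g$. (ii) For $q\ge1$: the images of $\xi^{\otimes}$ and $\xi^{\wedge}$ lie in $\mathfrak h$, and for every $x\in\mathfrak h\otimes^q\mathfrak g$ one has $\{\xi^{\otimes}(x)\}=qx$, and for every $x\in\mathfrak h\wedge^q\mathfrak g$ one has $\{\xi^{\wedge}(x)\}=qx$.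
   Context: All Lie algebras are over $\Lambda$. For $q\ge1$, the non-abelian $q$-tensor product $\mathfrak h\otimes^q\mathfrak g$ is the Lie algebra generated by symbols $h\otimes g$ and $\{h\}$ ($h\in\mathfrak h$, $g\in\mathfrak g$) subject to, for all $h,h'\in\mathfrak h$, $g,g'\in\mathfrak g$, $\lambda,\lambda'\in\Lambda$: (1) $\lambda(h\otimes g)=\lambda h\otimes g=h\otimes\lambda g$; (2) $(h+h')\otimes g=h\otimes g+h'\otimes g$; (3) $h\otimes(g+g')=h\otimes g+h\otimes g'$; (4) $[h,h']\otimes g=h\otimes[h',g]-h'\otimes[h,g]$; (5) $h\otimes[g,g']=[g',h]\otimes g-[g,h]\otimes g'$; (6) $[h\otimes g,h'\otimes g']=[h,g]\otimes[h',g']$; (7) $[\{h'\},h\otimes g]=[qh',h]\otimes g+h\otimes[qh',g]$; (8) $\{\lambda h+\lambda'h'\}=\lambda\{h\}+\lambda'\{h'\}$; (9) $[\{h\},\{h'\}]=qh\otimes qh'$; (10) $\{[h,g]\}=q(h\otimes g)$. For $q=0$, $\mathfrak h\otimes^0\mathfrak g$ is generated by the symbols $h\otimes g$ subject to (1)–(6) only (Ellis's non-abelian tensor product). The non-abelian $q$-exterior product $\mathfrak h\wedge^q\mathfrak g$ is the quotient of $\mathfrak h\otimes^q\mathfrak g$ by the relations $h\otimes h=0$, $h\in\mathfrak h$; images of generators are written $h\wedge g$ and $\{h\}$. *)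

(* Defs.v *)
From HB Require Import structures.
From mathcomp Require Import all_boot all_algebra.
Set Implicit Arguments. Unset Strict Implicit. Unset Printing Implicit Defensive.
Import GRing.Theory.
Local Open Scope ring_scope.

Definition is_lie (R : comPzRingType) (L : lmodType R) (br : L -> L -> L) : Prop :=
  [/\ (forall (a b : R) (x y z : L), br (a *: x + b *: y) z = a *: br x z + b *: br y z),
      (forall (a b : R) (x y z : L), br z (a *: x + b *: y) = a *: br z x + b *: br z y),
      (forall x : L, br x x = 0) &
      (forall x y z : L, br x (br y z) + br y (br z x) + br z (br x y) = 0)].

Definition is_lie_ideal (R : comPzRingType) (L : lmodType R) (br : L -> L -> L)
  (hP : L -> Prop) : Prop :=
  [/\ hP 0,
      (forall x y, hP x -> hP y -> hP (x + y)),
      (forall (a : R) x, hP x -> hP (a *: x)) &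
      (forall x y, hP x -> hP (br x y))].

(** Terms of the free (non-associative) R-algebra on the generators
    h (x) g  (TT a g, a in h, g in L)  and  {h}  (TC a, a in h). *)
Unset Implicit Arguments.
Inductive tterm (R : comPzRingType) (L : lmodType R) (hP : L -> Prop) : Type :=
| TZero
| TAdd of tterm R L hP & tterm R L hP
| TOpp of tterm R L hP
| TScale of R & tterm R L hP
| TBr of tterm R L hP & tterm R L hP
| TT of {x : L | hP x} & L
| TC of {x : L | hP x}.

Set Implicit Arguments.
Arguments TZero {R L hP}.
Arguments TAdd {R L hP}.
Arguments TOpp {R L hP}.
Arguments TScale {R L hP}.
Arguments TBr {R L hP}.
Arguments TT {R L hP}.
Arguments TC {R L hP}.

Fixpoint tmuln (R : comPzRingType) (L : lmodType R) (hP : L -> Prop)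
  (x : tterm R L hP) (n : nat) : tterm R L hP :=
  match n with
  | 0 => TZero
  | S k => TAdd x (tmuln x k)
  end.

(** The congruence defining the non-abelian q-tensor product (ext = false)
    resp. the q-exterior product (ext = true): the smallest congruence on
    terms containing the Lie algebra axioms and relations (1)-(10)
    (when q >= 1), resp. (1)-(6) plus {h} = 0 when q = 0 (so the extra
    generators {h} vanish and one recovers Ellis's tensor product);
    for ext = true additionally h (x) h = 0. *)
Section Rel.
Variables (R : comPzRingType) (L : lmodType R) (br : L -> L -> L)
  (hP : L -> Prop) (q : nat) (ext : bool).
Notation T := (tterm R L hP).
Notation H := {x : L | hP x}.

Inductive tequiv : T -> T -> Prop :=
| te_refl x : tequiv x x
| te_sym x y : tequiv x y -> tequiv y x
| te_trans x y z : tequiv x y -> tequiv y z -> tequiv x z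
| te_add x x' y y' : tequiv x x' -> tequiv y y' -> tequiv (TAdd x y) (TAdd x' y')
| te_opp x x' : tequiv x x' -> tequiv (TOpp x) (TOpp x')
| te_scale (a : R) x x' : tequiv x x' -> tequiv (TScale a x) (TScale a x')
| te_br x x' y y' : tequiv x x' -> tequiv y y' -> tequiv (TBr x y) (TBr x' y')
| te_addA x y z : tequiv (TAdd x (TAdd y z)) (TAdd (TAdd x y) z)
| te_addC x y : tequiv (TAdd x y) (TAdd y x)
| te_add0 x : tequiv (TAdd TZero x) x
| te_addN x : tequiv (TAdd (TOpp x) x) TZero
| te_scaleA (a b : R) x : tequiv (TScale a (TScale b x)) (TScale (a * b) x)
| te_scale1 x : tequiv (TScale 1 x) x
| te_scaleDr (a : R) x y : tequiv (TScale a (TAdd x y)) (TAdd (TScale a x) (TScale a y))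
| te_scaleDl (a b : R) x : tequiv (TScale (a + b) x) (TAdd (TScale a x) (TScale b x))
| te_brDl x y z : tequiv (TBr (TAdd x y) z) (TAdd (TBr x z) (TBr y z))
| te_brDr x y z : tequiv (TBr z (TAdd x y)) (TAdd (TBr z x) (TBr z y))
| te_brZl (a : R) x y : tequiv (TBr (TScale a x) y) (TScale a (TBr x y))
| te_brZr (a : R) x y : tequiv (TBr x (TScale a y)) (TScale a (TBr x y))
| te_brxx x : tequiv (TBr x x) TZero
| te_jacobi x y z :
    tequiv (TAdd (TAdd (TBr x (TBr y z)) (TBr y (TBr z x))) (TBr z (TBr x y))) TZero
| te_r1a (l : R) (a c : H) g : sval c = l *: sval a ->
    tequiv (TScale l (TT a g)) (TT c g)
| te_r1b (l : R) (a : H) g : tequiv (TScale l (TT a g)) (TT a (l *: g))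
| te_r2 (a b c : H) g : sval c = sval a + sval b ->
    tequiv (TT c g) (TAdd (TT a g) (TT b g))
| te_r3 (a : H) g g' : tequiv (TT a (g + g')) (TAdd (TT a g) (TT a g'))
| te_r4 (a b c : H) g : sval c = br (sval a) (sval b) ->
    tequiv (TT c g) (TAdd (TT a (br (sval b) g)) (TOpp (TT b (br (sval a) g))))
| te_r5 (a c d : H) g g' : sval c = br g' (sval a) -> sval d = br g (sval a) ->
    tequiv (TT a (br g g')) (TAdd (TT c g) (TOpp (TT d g')))
| te_r6 (a b c : H) g g' : sval c = br (sval a) g ->
    tequiv (TBr (TT a g) (TT b g')) (TT c (br (sval b) g'))
| te_r7 (a b c : H) g : (0 < q)%N -> sval c = br (sval b *+ q) (sval a) ->
    tequiv (TBr (TC b) (TT a g)) (TAdd (TT c g) (TT a (br (sval b *+ q) g)))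
| te_r8 (l l' : R) (a b c : H) : (0 < q)%N -> sval c = l *: sval a + l' *: sval b ->
    tequiv (TC c) (TAdd (TScale l (TC a)) (TScale l' (TC b)))
| te_r9 (a b c : H) : (0 < q)%N -> sval c = sval a *+ q ->
    tequiv (TBr (TC a) (TC b)) (TT c (sval b *+ q))
| te_r10 (a c : H) g : (0 < q)%N -> sval c = br (sval a) g ->
    tequiv (TC c) (tmuln (TT a g) q)
| te_q0 (a : H) : q = 0%N -> tequiv (TC a) TZero
| te_ext (a : H) : ext = true -> tequiv (TT a (sval a)) TZero.
End Rel.

Definition induces_lie_hom (R : comPzRingType) (L : lmodType R) (br : L -> L -> L)
  (hP : L -> Prop) (q : nat) (ext : bool) (f : tterm R L hP -> L) : Prop :=
  (forall x y, tequiv br q ext x y -> f x = f y) /\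
  [/\ f TZero = 0,
      (forall x y, f (TAdd x y) = f x + f y),
      (forall x, f (TOpp x) = - f x),
      (forall (a : R) x, f (TScale a x) = a *: f x) &
      (forall x y, f (TBr x y) = br (f x) (f y))].

(* Main.v *)
Require Import Defs.
From HB Require Import structures.
From mathcomp Require Import all_boot all_algebra.
From Stdlib Require Import Setoid Morphisms.
Import GRing.Theory.
Local Open Scope ring_scope.

Section T.
Variables (R : comPzRingType) (L : lmodType R) (br : L -> L -> L) (hP : L -> Prop) (q : nat) (ext : bool).
Local Notation T := (tterm R L hP).
Local Notation E := (@tequiv R L br hP q ext).
Local Notation "x =~ y" := (E x y) (at level 70).

#[local] Instance teq_equiv : Equivalence E.
Proof. split; [exact: te_refl | exact: te_sym | exact: te_trans]. Qed.
#[local] Instance add_prop : Proper (E ==> E ==> E) TAdd.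
Proof. by move=> ? ? ? ? ? ?; apply: te_add. Qed.
#[local] Instance opp_prop : Proper (E ==> E) TOpp.
Proof. by move=> ? ? ?; apply: te_opp. Qed.
#[local] Instance scale_prop a : Proper (E ==> E) (TScale a).
Proof. by move=> ? ? ?; apply: te_scale. Qed.
#[local] Instance br_prop : Proper (E ==> E ==> E) TBr.
Proof. by move=> ? ? ? ? ? ?; apply: te_br. Qed.
#[local] Hint Resolve te_refl : core.

Lemma t_addA (x y z : T) : TAdd x (TAdd y z) =~ TAdd (TAdd x y) z.
Proof. exact: te_addA. Qed.
Lemma t_addC (x y : T) : TAdd x y =~ TAdd y x.
Proof. exact: te_addC. Qed.
Lemma t_add0l (x : T) : TAdd TZero x =~ x.
Proof. exact: te_add0. Qed.
Lemma t_add0r (x : T) : TAdd x TZero =~ x.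
Proof. rewrite t_addC. exact: te_add0. Qed.
Lemma t_addNl (x : T) : TAdd (TOpp x) x =~ TZero.
Proof. exact: te_addN. Qed.
Lemma t_scaleA a b (x : T) : TScale a (TScale b x) =~ TScale (a * b) x.
Proof. exact: te_scaleA. Qed.
Lemma t_scale1 (x : T) : TScale 1 x =~ x.
Proof. exact: te_scale1. Qed.
Lemma t_scaleDr a (x y : T) : TScale a (TAdd x y) =~ TAdd (TScale a x) (TScale a y).
Proof. exact: te_scaleDr. Qed.
Lemma t_scaleDl a b (x : T) : TScale (a + b) x =~ TAdd (TScale a x) (TScale b x).
Proof. exact: te_scaleDl. Qed.
Lemma t_brDl (x y z : T) : TBr (TAdd x y) z =~ TAdd (TBr x z) (TBr y z).
Proof. exact: te_brDl. Qed.
Lemma t_brDr (x y z : T) : TBr z (TAdd x y) =~ TAdd (TBr z x) (TBr z y).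
Proof. exact: te_brDr. Qed.
Lemma t_brZl a (x y : T) : TBr (TScale a x) y =~ TScale a (TBr x y).
Proof. exact: te_brZl. Qed.
Lemma t_brZr a (x y : T) : TBr x (TScale a y) =~ TScale a (TBr x y).
Proof. exact: te_brZr. Qed.
Lemma t_brxx (x : T) : TBr x x =~ TZero.
Proof. exact: te_brxx. Qed.

Lemma t_addIl (a x y : T) : TAdd a x =~ TAdd a y -> x =~ y.
Proof.
move=> H.
have e : forall z, z =~ TAdd (TOpp a) (TAdd a z) by move=> z; rewrite t_addA t_addNl t_add0l.
by rewrite (e x) H -e.
Qed.
Lemma t_opp_unique (x y : T) : TAdd x y =~ TZero -> y =~ TOpp x.
Proof.
move=> H; transitivity (TAdd (TOpp x) (TAdd x y)); last by rewrite H t_add0r.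
by rewrite t_addA t_addNl t_add0l.
Qed.
Lemma t_oppK (x : T) : TOpp (TOpp x) =~ x.
Proof. symmetry; apply: t_opp_unique; exact: t_addNl. Qed.
Lemma t_scale0 (x : T) : TScale 0 x =~ TZero.
Proof.
have H := t_scaleDl 0 0 x; rewrite addr0 in H.
apply: (@t_addIl (TScale 0 x)); rewrite t_add0r; symmetry; exact H.
Qed.
Lemma t_scaleN1 (x : T) : TScale (-1) x =~ TOpp x.
Proof.
apply: t_opp_unique.
transitivity (TAdd (TScale 1 x) (TScale (-1) x)); first by rewrite t_scale1.
by rewrite -t_scaleDl subrr t_scale0.
Qed.
Lemma t_scaler0 a : TScale a (TZero : T) =~ TZero.
Proof.
transitivity (TScale a (TScale 0 (TZero : T))); first by rewrite t_scale0.
by rewrite t_scaleA mulr0 t_scale0.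
Qed.
Lemma t_oppD (x y : T) : TOpp (TAdd x y) =~ TAdd (TOpp x) (TOpp y).
Proof. by rewrite -!t_scaleN1 t_scaleDr. Qed.
Lemma t_opp0 : TOpp (TZero : T) =~ TZero.
Proof. by rewrite -t_scaleN1 t_scaler0. Qed.
Lemma t_br0l (y : T) : TBr TZero y =~ TZero.
Proof.
transitivity (TBr (TScale 0 TZero) y); first by rewrite t_scale0.
by rewrite t_brZl t_scale0.
Qed.
Lemma t_br0r (y : T) : TBr y TZero =~ TZero.
Proof.
transitivity (TBr y (TScale 0 TZero)); first by rewrite t_scale0.
by rewrite t_brZr t_scale0.
Qed.
Lemma t_brNl (x y : T) : TBr (TOpp x) y =~ TOpp (TBr x y).
Proof. by rewrite -!t_scaleN1 t_brZl. Qed.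
Lemma t_brNr (x y : T) : TBr x (TOpp y) =~ TOpp (TBr x y).
Proof. by rewrite -!t_scaleN1 t_brZr. Qed.
Lemma t_brC (x y : T) : TBr y x =~ TOpp (TBr x y).
Proof.
apply: t_opp_unique.
have H := t_brxx (TAdd x y).
rewrite t_brDl !t_brDr !t_brxx t_add0l t_add0r in H; exact H.
Qed.
Lemma t_jac (k x y : T) :
  TBr k (TBr x y) =~ TAdd (TBr (TBr k x) y) (TBr x (TBr k y)).
Proof.
have H : TAdd (TAdd (TBr k (TBr x y)) (TBr x (TBr y k))) (TBr y (TBr k x)) =~ TZero
  by exact: te_jacobi.
rewrite -t_addA t_addC in H.
apply t_opp_unique in H.
rewrite H t_oppD (t_brC k y) t_brNr t_oppK -(t_brC y (TBr k x)) t_addC //.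
Qed.

Lemma tmuln_proper (x y : T) n : x =~ y -> tmuln x n =~ tmuln y n.
Proof. by move=> H; elim: n => //= n IH; rewrite IH H. Qed.
Lemma t_perm (a b c d : T) :
  TAdd (TAdd a b) (TAdd c d) =~ TAdd (TAdd a c) (TAdd b d).
Proof.
by rewrite -t_addA (t_addA b c d) (t_addC b c) -(t_addA c b d) t_addA.
Qed.
Lemma tmuln_add (x y : T) n : tmuln (TAdd x y) n =~ TAdd (tmuln x n) (tmuln y n).
Proof. elim: n => /= [|n IH]; first by rewrite t_add0l. by rewrite IH t_perm. Qed.
Lemma tmuln0 n : tmuln (TZero : T) n =~ TZero.
Proof. elim: n => //= n IH; by rewrite IH t_add0l. Qed.
Lemma tmuln_opp (x : T) n : tmuln (TOpp x) n =~ TOpp (tmuln x n).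
Proof. elim: n => /= [|n IH]; first by rewrite t_opp0. by rewrite IH t_oppD. Qed.
Lemma tmuln_scale a (x : T) n : tmuln (TScale a x) n =~ TScale a (tmuln x n).
Proof. elim: n => /= [|n IH]; first by rewrite t_scaler0. by rewrite IH t_scaleDr. Qed.
Lemma tmuln_brl (x y : T) n : TBr (tmuln x n) y =~ tmuln (TBr x y) n.
Proof. elim: n => /= [|n IH]; first by rewrite t_br0l. by rewrite t_brDl IH. Qed.

Section L.
Hypothesis Hlie : is_lie br.
Hypothesis Hideal : is_lie_ideal br hP.

Lemma brDl x y z : br (x + y) z = br x z + br y z.
Proof. case: Hlie => Hl _ _ _. by have := Hl 1 1 x y z; rewrite !scale1r. Qed.
Lemma brDr x y z : br z (x + y) = br z x + br z y.
Proof. case: Hlie => _ Hr _ _. by have := Hr 1 1 x y z; rewrite !scale1r. Qed.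
Lemma brZl a x z : br (a *: x) z = a *: br x z.
Proof. case: Hlie => Hl _ _ _. by have := Hl a 0 x x z; rewrite !scale0r !addr0. Qed.
Lemma brZr a x z : br z (a *: x) = a *: br z x.
Proof. case: Hlie => _ Hr _ _. by have := Hr a 0 x x z; rewrite !scale0r !addr0. Qed.
Lemma br0l z : br 0 z = 0.
Proof. by have := brZl 0 z z; rewrite !scale0r. Qed.
Lemma br0r z : br z 0 = 0.
Proof. by have := brZr 0 z z; rewrite !scale0r. Qed.
Lemma brNl x z : br (- x) z = - br x z.
Proof. by rewrite -scaleN1r brZl scaleN1r. Qed.
Lemma brNr x z : br z (- x) = - br z x.
Proof. by rewrite -scaleN1r brZr scaleN1r. Qed.
Lemma brMnl x z n : br (x *+ n) z = br x z *+ n.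
Proof. by rewrite -!scaler_nat brZl. Qed.
Lemma brMnr x z n : br z (x *+ n) = br z x *+ n.
Proof. by rewrite -!scaler_nat brZr. Qed.
Lemma brC x y : br y x = - br x y.
Proof.
case: Hlie => _ _ Hxx _.
have := Hxx (x + y); rewrite brDl !brDr !Hxx add0r addr0 => H.
by apply/eqP; rewrite -addr_eq0 addrC H.
Qed.
Lemma jac x y z : br x (br y z) = br (br x y) z + br y (br x z).
Proof.
case: Hlie => _ _ _ Hj.
have := Hj x y z; rewrite (brC (br x y) z) (brC x z) brNr => /eqP.
by rewrite -addrA addr_eq0 opprD !opprK addrC => /eqP.
Qed.

Lemma hP0 : hP 0. Proof. by case: Hideal. Qed.
Lemma hPD x y : hP x -> hP y -> hP (x + y). Proof. by case: Hideal => _ H _ _; apply: H. Qed.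
Lemma hPZ a x : hP x -> hP (a *: x). Proof. by case: Hideal => _ _ H _; apply: H. Qed.
Lemma hPbr x y : hP x -> hP (br x y). Proof. by case: Hideal => _ _ _ H; apply: H. Qed.
Lemma hPN x : hP x -> hP (- x). Proof. by rewrite -scaleN1r; apply: hPZ. Qed.
Lemma hPMn x n : hP x -> hP (x *+ n). Proof. by rewrite -scaler_nat; apply: hPZ. Qed.
Lemma hPbrr x y : hP x -> hP (br y x). Proof. by move=> h; rewrite brC; apply/hPN/hPbr. Qed.

Fixpoint xi (x : T) : L :=
  match x with
  | TZero => 0
  | TAdd x y => xi x + xi y
  | TOpp x => - xi x
  | TScale a x => a *: xi x
  | TBr x y => br (xi x) (xi y)
  | TT a g => br (sval a) g
  | TC a => sval a *+ q
  end.

Lemma xi_tmuln x n : xi (tmuln x n) = xi x *+ n.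
Proof. by elim: n => //= n ->; rewrite mulrS. Qed.

Lemma xi_hP x : hP (xi x).
Proof.
elim: x => /= [|x Hx y Hy|x Hx|a x Hx|x Hx y Hy|a g|a].
- exact: hP0.
- exact: hPD.
- exact: hPN.
- exact: hPZ.
- exact: hPbr.
- exact: (hPbr _ _ (proj2_sig a)).
- exact: (hPMn _ _ (proj2_sig a)).
Qed.

Lemma xi_wd x y : x =~ y -> xi x = xi y.
Proof.
case: (Hlie) => _ _ Hxx Hj.
elim=> {x y} /=; intros; subst => //;
  repeat match goal with H : sval _ = _ |- _ => rewrite H; clear H end.
all: try congruence.
- exact: addrA.
- exact: addrC.
- exact: add0r.
- exact: addNr.
- exact: scalerA.
- exact: scale1r.
- exact: scalerDr.
- exact: scalerDl.
- exact: brDl.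
- exact: brDr.
- exact: brZl.
- exact: brZr.
- by rewrite brZl.
- by rewrite brZr.
- exact: brDl.
- exact: brDr.
- by rewrite jac addrK.
- rewrite jac (brC (sval a) g) brNl opprK (brC (sval a) g') brNl.
  rewrite (brC g (br (sval a) g')) opprK.
  by rewrite addrC.
- exact: jac.
- by rewrite mulrnDl !scalerMnr.
- by rewrite xi_tmuln.
Qed.

Local Notation H := {x : L | hP x}.
Definition hbr (k : H) v : H := exist hP (br (sval k) v) (hPbr _ v (proj2_sig k)).
Definition hmn (k : H) n : H := exist hP (sval k *+ n) (hPMn _ n (proj2_sig k)).
Definition hopp (k : H) : H := exist hP (- sval k) (hPN _ (proj2_sig k)).
Definition hxi x : H := exist hP (xi x) (xi_hP x).

Section Q.
Hypothesis Hq : (0 < q)%N.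

Lemma TC_lin {l l'} {a b c : H} : sval c = l *: sval a + l' *: sval b ->
  TC c =~ TAdd (TScale l (TC a)) (TScale l' (TC b)).
Proof. by move=> e; apply: te_r8. Qed.
Lemma t_r7 (a b c : H) g : sval c = br (sval b *+ q) (sval a) ->
  TBr (TC b) (TT a g) =~ TAdd (TT c g) (TT a (br (sval b *+ q) g)).
Proof. by move=> e; apply: te_r7. Qed.
Lemma t_r9 (a b c : H) : sval c = sval a *+ q ->
  TBr (TC a) (TC b) =~ TT c (sval b *+ q).
Proof. by move=> e; apply: te_r9. Qed.
Lemma t_r10 (a c : H) g : sval c = br (sval a) g -> TC c =~ tmuln (TT a g) q.
Proof. by move=> e; apply: te_r10. Qed.

Lemma TC_zero (c : H) : sval c = 0 -> TC c =~ TZero.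
Proof.
move=> e; have h : sval c = 0 *: sval c + 0 *: sval c by rewrite !scale0r addr0.
by rewrite (TC_lin h) !t_scale0 t_add0l.
Qed.
Lemma TC_add (a b c : H) : sval c = sval a + sval b -> TC c =~ TAdd (TC a) (TC b).
Proof.
move=> e; have h : sval c = 1 *: sval a + 1 *: sval b by rewrite !scale1r.
by rewrite (TC_lin h) !t_scale1.
Qed.
Lemma TC_scale l (a c : H) : sval c = l *: sval a -> TC c =~ TScale l (TC a).
Proof.
move=> e; have h : sval c = l *: sval a + 0 *: sval a by rewrite scale0r addr0.
by rewrite (TC_lin h) t_scale0 t_add0r.
Qed.
Lemma TC_opp (a c : H) : sval c = - sval a -> TC c =~ TOpp (TC a).
Proof. move=> e; rewrite -t_scaleN1; apply: TC_scale; by rewrite e scaleN1r. Qed.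
Lemma TC_muln (a : H) n : forall c : H, sval c = sval a *+ n -> TC c =~ tmuln (TC a) n.
Proof.
elim: n => [|n IH] c e /=; first exact: TC_zero.
rewrite (@TC_add a (hmn a n) c); last by rewrite e mulrS.
by rewrite (IH (hmn a n) erefl).
Qed.

Lemma TT_zero (a : H) g : sval a = 0 -> TT a g =~ TZero.
Proof.
move=> e; transitivity (TScale 0 (TT a g)); last exact: t_scale0.
symmetry; apply: te_r1a; by rewrite e scale0r.
Qed.
Lemma TT_mulnl (a : H) g n : forall c : H, sval c = sval a *+ n -> TT c g =~ tmuln (TT a g) n.
Proof.
elim: n => [|n IH] c e /=; first exact: TT_zero.
rewrite (@te_r2 R L br hP q ext a (hmn a n) c g); last by rewrite e mulrS.
by rewrite (IH (hmn a n) erefl).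
Qed.
Lemma TT_zero_r (a : H) : TT a 0 =~ TZero.
Proof.
have h := @te_r1b R L br hP q ext 0 a 0; rewrite scale0r in h.
by rewrite -h t_scale0.
Qed.
Lemma TT_mulnr (a : H) g n : TT a (g *+ n) =~ tmuln (TT a g) n.
Proof.
elim: n => [|n IH] /=; first by rewrite mulr0n TT_zero_r.
by rewrite mulrS te_r3 IH.
Qed.

Lemma actC x : forall (k c : H), sval c = br (sval k) (xi x) -> TBr (TC k) x =~ TC c.
Proof.
elim: x => [|x IHx y IHy|x IHx|a x IHx|x IHx y IHy|a g|a] k c /= e.
- rewrite t_br0r; symmetry; apply: TC_zero; by rewrite e br0r.
- rewrite t_brDr (IHx k (hbr k (xi x)) erefl) (IHy k (hbr k (xi y)) erefl).
  symmetry; apply: TC_add; by rewrite e brDr.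
- rewrite t_brNr (IHx k (hbr k (xi x)) erefl).
  symmetry; apply: TC_opp; by rewrite e brNr.
- rewrite t_brZr (IHx k (hbr k (xi x)) erefl).
  symmetry; apply: TC_scale; by rewrite e brZr.
- rewrite t_jac (IHx k (hbr k (xi x)) erefl).
  rewrite (IHy (hbr k (xi x)) (hbr (hbr k (xi x)) (xi y)) erefl).
  rewrite (IHy k (hbr k (xi y)) erefl) (t_brC (TC (hbr k (xi y))) x).
  rewrite (IHx (hbr k (xi y)) (hbr (hbr k (xi y)) (xi x)) erefl).
  rewrite -(@TC_opp _ (hopp (hbr (hbr k (xi y)) (xi x))) erefl).
  symmetry; apply: TC_add.
  by rewrite e /= jac (brC (br (sval k) (xi y)) (xi x)).
- rewrite (@t_r7 a k (hbr (hmn k q) (sval a)) g erefl).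
  rewrite (@TT_mulnl (hbr k (sval a)) g q (hbr (hmn k q) (sval a))); last first.
    by rewrite /= brMnl.
  rewrite brMnl TT_mulnr.
  symmetry.
  rewrite (@TC_add (hbr (hbr k (sval a)) g) (hbr a (br (sval k) g)) c); last first.
    by rewrite e /= jac.
  by rewrite (t_r10 (hbr k (sval a)) (hbr (hbr k (sval a)) g) g erefl) (t_r10 a (hbr a (br (sval k) g)) (br (sval k) g) erefl).
- rewrite (@t_r9 k a (hmn k q) erefl) (@TT_mulnl k _ q (hmn k q) erefl).
  symmetry; exact: t_r10.
Qed.

Lemma xi_TC x : forall c : H, sval c = xi x -> TC c =~ tmuln x q.
Proof.
elim: x => [|x IHx y IHy|x IHx|a x IHx|x IHx y IHy|a g|a] c /= e.
- by rewrite tmuln0; apply: TC_zero.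
- by rewrite (@TC_add (hxi x) (hxi y) c e) (IHx (hxi x) erefl) (IHy (hxi y) erefl) tmuln_add.
- by rewrite (@TC_opp (hxi x) c e) (IHx (hxi x) erefl) tmuln_opp.
- by rewrite (@TC_scale a (hxi x) c e) (IHx (hxi x) erefl) tmuln_scale.
- by rewrite -(@actC y (hxi x) c e) (IHx (hxi x) erefl) tmuln_brl.
- exact: t_r10.
- exact: TC_muln.
Qed.
End Q.
End L.
End T.

Theorem lemma2p4 (R : comPzRingType) (q : nat) (L : lmodType R) (br : L -> L -> L)
  (hP : L -> Prop) (Hlie : is_lie br) (Hideal : is_lie_ideal br hP) :
  exists xi : tterm R L hP -> L,
    (* (i) xi^tensor is a Lie homomorphism h (x)^q g -> g *)
    [/\ induces_lie_hom br q false xi,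
        (forall (a : {x : L | hP x}) (g : L), xi (TT a g) = br (sval a) g),
        (forall a : {x : L | hP x}, (0 < q)%N -> xi (TC a) = sval a *+ q) &
        (* it factors through the projection h (x)^q g -> h /\^q g,
           inducing a Lie homomorphism xi^wedge *)
        induces_lie_hom br q true xi]
    /\
    (* (ii) *)
    ((0 < q)%N ->
      (forall x : tterm R L hP, hP (xi x)) /\
      (forall (x : tterm R L hP) (Hx : hP (xi x)),
          tequiv br q false (TC (exist _ (xi x) Hx)) (tmuln x q)) /\
      (forall (x : tterm R L hP) (Hx : hP (xi x)),
          tequiv br q true (TC (exist _ (xi x) Hx)) (tmuln x q))).
Proof.
exists (@xi R L br hP q); split; first split.
- split; first by move=> x y; exact: (@xi_wd R L br hP q false Hlie x y).
  by split.
- by [].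
- by [].
- split; first by move=> x y; exact: (@xi_wd R L br hP q true Hlie x y).
  by split.
- move=> Hq; split; first exact: (@xi_hP R L br hP q Hideal).
  by split=> x Hx; [exact: (@xi_TC R L br hP q false Hlie Hideal Hq x (exist _ (@xi R L br hP q x) Hx) erefl) | exact: (@xi_TC R L br hP q true Hlie Hideal Hq x (exist _ (@xi R L br hP q x) Hx) erefl)].
Qed.
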